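(* For $\beta\in\mathbb{N}$, $n\in\mathbb{N}$, $r\in\mathbb{Z}$ let $$T_{0,\beta}^{(2)}(n,r)=\frac{1}{\lfloor n/2^{\beta-1}\rfloor!}\sum_{k\equiv r\ (\mathrm{mod}\ 2^{\beta})}\binom nk(-1)^k.$$ Let $\alpha\in\mathbb{N}$, $n\in\mathbb{Z}^+$, $r\in\mathbb{Z}$ with $n\equiv r\equiv0\pmod{2^{\alpha}}$. Then $T_{0,\alpha+1}^{(2)}(n,r)\equiv1\pmod 2$ if and only if $n$ is a power of $2$.
   Context: The sum runs over all integers $k\equiv r\pmod{2^\beta}$ with $\binom nk=0$ unless $0\le k\le n$. For rationals $u,v$, $u\equiv v\pmod 2$ means $\operatorname{ord}_2(u-v)\ge1$. *)

(* Defs.v *)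
From mathcomp Require Import all_boot all_order all_algebra.
Set Implicit Arguments. Unset Strict Implicit. Unset Printing Implicit Defensive.
Import Order.TTheory GRing.Theory Num.Theory.
Local Open Scope ring_scope.

(* floor(n / 2^(beta-1)) for beta : nat; equals (2n) div 2^beta
   (also correct for beta = 0, where 2^(-1) = 1/2). *)
Definition floor_div_pow2m1 (beta n : nat) : nat := ((2 * n) %/ 2 ^ beta)%N.

(* T^{(2)}_{0,beta}(n,r) = 1/floor(n/2^(beta-1))! *
   sum_{k = r mod 2^beta} C(n,k) (-1)^k ; C(n,k)=0 outside 0<=k<=n. *)
Definition T2 (beta n : nat) (r : int) : rat :=
  (((floor_div_pow2m1 beta n)`!)%:R)^-1 *
  \sum_(0 <= k < n.+1 | ((k%:Z - r) %% (2 ^ beta)%:Z)%Z == 0)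
     ('C(n, k)%:R * (-1) ^+ k).

Definition ord2 (x : rat) : int :=
  (logn 2 `|numq x|%N)%:Z - (logn 2 `|denq x|%N)%:Z.

(* u = v (mod 2) for rationals: ord_2(u - v) >= 1 (ord_2 0 = +oo). *)
Definition rat_cong2 (u v : rat) : Prop :=
  (u - v == 0) \/ (1 <= ord2 (u - v)).

(* Main.v *)
Require Import Defs.
From mathcomp Require Import all_boot all_order all_algebra.
From mathcomp Require Import ring lra zify.
Set Implicit Arguments. Unset Strict Implicit. Unset Printing Implicit Defensive.
Import Order.TTheory GRing.Theory Num.Theory.
Local Open Scope ring_scope.

Definition cnd (N : nat) (r : int) (k : nat) : bool := ((k%:Z - r) %% N%:Z)%Z == 0.
Definition fold (N : nat) (r : int) (B : nat) (p : {poly int}) : int :=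
  \sum_(0 <= k < B | cnd N r k) p`_k.

Lemma foldD N r B p q : fold N r B (p + q) = fold N r B p + fold N r B q.
Proof. by rewrite /fold -big_split /=; apply: eq_bigr => k _; rewrite coefD. Qed.

Lemma foldB N r B p q : fold N r B (p - q) = fold N r B p - fold N r B q.
Proof. by rewrite /fold -sumrB /=; apply: eq_bigr => k _; rewrite coefB. Qed.

Lemma foldMn N r B (c : nat) p : fold N r B (c%:R * p) = c%:R * fold N r B p.
Proof.
rewrite /fold mulr_sumr; apply: eq_bigr => k _.
by rewrite mulr_natl coefMn mulr_natl.
Qed.

Lemma fold_widen N r B B' (p : {poly int}) : (size p <= B)%N -> (B <= B')%N ->
  fold N r B' p = fold N r B p.
Proof.
move=> hp hB; rewrite /fold (big_cat_nat (n := B)) //=.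
rewrite [X in _ + X]big_nat_cond [X in _ + X]big1 ?addr0 // => k /andP [/andP [hk _] _].
by rewrite nth_default // (leq_trans hp hk).
Qed.

Lemma cnd_shift N r k : cnd N r (k + N) = cnd N r k.
Proof.
rewrite /cnd PoszD addrAC; congr (_ == _).
by rewrite modzDr.
Qed.

Lemma fold_cyc N r B (C : {poly int}) : (size C + N <= B)%N ->
  fold N r B (('X^N - 1) * C) = 0.
Proof.
move=> hB.
rewrite mulrBl mul1r foldB.
have -> : fold N r B ('X^N * C) = fold N r (B - N) C.
  rewrite /fold (big_cat_nat (n := N)) //=; last by lia.
  rewrite big_nat_cond big1 ?add0r; last by move=> k /andP [/andP [_ hk] _]; rewrite coefXnM hk.
  rewrite -{1}(add0n N) big_addn.
  apply: eq_big => [k|k _]; first by rewrite cnd_shift.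
  by rewrite coefXnM ltnNge leq_addl /= addnK.
rewrite (@fold_widen N r (B - N) B) ?subrr //; lia.
Qed.

Lemma fold_Xn N r B j : (j < B)%N -> fold N r B 'X^j = (cnd N r j)%:R.
Proof.
move=> hj.
transitivity (\sum_(0 <= k < B | k == j) ((cnd N r k)%:R : int)).
  rewrite /fold big_mkcond [RHS]big_mkcond; apply: eq_bigr => k _.
  by rewrite coefXn; case: eqP => [->|]; case: (cnd N r _).
by rewrite big_nat1_eq /= hj.
Qed.

Lemma cnd_pm (q : nat) (r : int) : (0 < q)%N -> (q%:Z %| r)%Z ->
  ((cnd (q * 2) r 0)%:R - (cnd (q * 2) r q)%:R == 1 :> int) ||
  ((cnd (q * 2) r 0)%:R - (cnd (q * 2) r q)%:R == -1 :> int).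
Proof.
move=> q0 /dvdzP [t ->].
have key : forall k : int, ((k - t * q%:Z) %% (q * 2)%N%:Z)%Z = ((k - (t %% 2)%Z * q%:Z) %% (q * 2)%N%:Z)%Z.
  move=> k; rewrite {1}(divz_eq t 2) mulrDl -mulrA.
  rewrite opprD addrA addrAC.
  have -> : (2 * q%:Z) = (q * 2)%N%:Z by rewrite PoszM mulrC.
  by rewrite addrC -mulNr modzMDl.
rewrite /cnd !key.
have : (t %% 2)%Z = 0 \/ (t %% 2)%Z = 1.
  have h0 := modz_ge0 t (isT : (2:int) != 0).
  have h1 := ltz_pmod t (isT : (0:int) < 2).
  lia.
have hq1 : (q%:Z %% (q * 2)%N%:Z)%Z = q%:Z.
  by apply: modz_small; apply/andP; split; lia.
have hq2 : ((- q%:Z) %% (q * 2)%N%:Z)%Z = q%:Z.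
  rewrite -(modzDr (-q%:Z)) (_ : - q%:Z + (q * 2)%N%:Z = q%:Z) ?hq1 //. rewrite PoszM; lia.
case=> ->.
  rewrite mul0r !subr0 hq1 modz_nat mod0n /=.
  by case: q q0 {key hq1 hq2}.
rewrite mul1r subrr sub0r hq2 modz_nat mod0n /=.
by case: q q0 {key hq1 hq2}.
Qed.
Lemma exH a : exists H : {poly int}, (1 - 'X)^+(2^a) = (1 - 'X^(2^a)) + 2 * H.
Proof.
elim: a => [|a [H IH]]; first by exists 0; rewrite expn0 !expr1 mulr0 addr0.
exists ('X^(2^a) ^+ 2 - 'X^(2^a) + 2 * H * (1 - 'X^(2^a)) + 2 * H ^+ 2).
rewrite expnS mulnC exprM IH exprM.
ring.
Qed.

Section G.
Variable R : comRingType.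
Lemma good (Y H : R) m : exists U V C : R,
  ((1 - Y) + 2 * H) ^+ m.+1 = 2 ^+ m * ((1 - Y) * U + 2 * V) + (Y ^+ 2 - 1) * C.
Proof.
elim: m => [|m [U [V [C IH]]]]; first by exists 1, H, 0; ring.
exists (U + H * U + V), (H * V), (2 ^+ m * U + C * ((1 - Y) + 2 * H)).
rewrite exprSr IH [(2 : R) ^+ m.+1]exprS; move: (2 ^+ m) => t; ring.
Qed.

Lemma good1 (Y H : R) j : exists D C : R,
  ((1 - Y) + 2 * H) ^+ (2 ^ j) = 2 ^+ (2 ^ j).-1 * ((1 - Y) + 2 * D) + (Y ^+ 2 - 1) * C.
Proof.
elim: j => [|j [D [C IH]]]; first by exists H, 0; rewrite expn0 /=; ring.
set c := (2 : R) ^+ (2 ^ j).-1.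
have e : (2 ^ j.+1).-1 = ((2 ^ j).-1 * 2).+1.
  rewrite expnS; have := expn_gt0 2 j; lia.
exists (D * (1 - Y) + D ^+ 2), (c ^+ 2 + 2 * c * ((1 - Y) + 2 * D) * C + (Y ^+ 2 - 1) * C ^+ 2).
rewrite e expnS mulnC exprM IH [(2 : R) ^+ _.+1]exprS exprM -/c; move: c => c; ring.
Qed.
End G.

Lemma coef_1subX n k : ((1 - 'X)^+n : {poly int})`_k = ('C(n,k))%:R * (-1)^+k.
Proof.
elim: n k => [|n IH] k.
  by rewrite expr0 coef1 bin0n; case: k => //= k; rewrite mul0r.
rewrite exprS mulrBl mul1r coefB coefXM IH.
case: k => [|k] /=; first by rewrite !bin0 subr0.
rewrite IH binS natrD exprS; move: ((-1 : int) ^+ k) => s; ring.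
Qed.
Local Open Scope nat_scope.
Lemma logn2_odd m : odd m -> logn 2 m = 0.
Proof.
move=> om; have m0 : 0 < m by case: m om.
apply/eqP; rewrite -leqn0 leqNgt -(pfactor_dvdn 1 (isT : prime 2) m0) expn1.
by rewrite dvdn2 om.
Qed.

Lemma logn2_double t : 0 < t -> logn 2 t.*2 = (logn 2 t).+1.
Proof.
by move=> t0; rewrite -mul2n lognM // (lognn (isT : prime 2)).
Qed.

Lemma v2fact_double t : logn 2 (t.*2)`! = t + logn 2 t`!.
Proof.
elim: t => [|t IH] //.
rewrite doubleS !factS !lognM ?fact_gt0 ?muln_gt0 ?fact_gt0 // IH.
have e : (t.*2).+2 = (t.+1).*2 by rewrite doubleS.
rewrite e logn2_double // (logn2_odd (m := t.*2.+1)) ?odd_double //=; [lia | by rewrite odd_double].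
Qed.

Lemma v2fact_odd t : logn 2 (t.*2.+1)`! = logn 2 (t.*2)`!.
Proof. by rewrite factS lognM ?fact_gt0 // logn2_odd //= odd_double. Qed.

Definition pow2 m := m == 2 ^ logn 2 m.

Lemma pow2P m : reflect (exists j, m = 2 ^ j) (pow2 m).
Proof.
apply: (iffP eqP) => [-> | [j ->]]; first by eexists.
by rewrite pfactorK.
Qed.

Lemma pow2_double t : 0 < t -> pow2 t.*2 = pow2 t.
Proof.
move=> t0; rewrite /pow2 logn2_double // expnS -!mul2n.
by rewrite eqn_pmul2l.
Qed.

Lemma pow2_odd t : pow2 t.*2.+1 = (t == 0).
Proof.
rewrite /pow2 logn2_odd /=; last by rewrite odd_double.
by case: t.
Qed.

Lemma v2fact m : 0 < m -> (logn 2 m`!).+1 <= m /\ (((logn 2 m`!).+1 == m) = pow2 m).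
Proof.
elim/ltn_ind: m => m IH m0.
have hm := odd_double_half m; set t := m./2 in hm.
have tm : t < m by rewrite /t -divn2 ltn_Pdiv.
rewrite -hm.
case: (odd m) hm => /= hm.
  rewrite add1n v2fact_odd v2fact_double pow2_odd.
  have [->|t0] := posnP t; first by rewrite fact0 logn1.
  have [h1 _] := IH t tm t0.
  have -> : (t + logn 2 t`!).+1 == t.*2.+1 = false by apply/negbTE; lia.
  split=> //; lia.
rewrite add0n v2fact_double.
have t0 : 0 < t by lia.
rewrite pow2_double //.
have [h1 h2] := IH t tm t0.
split; first lia.
rewrite -h2; apply/eqP/eqP; lia.
Qed.
Local Open Scope ring_scope.
Lemma frac_odd (a b : int) : odd `|a|%N -> odd `|b|%N ->
  ord2 (a%:~R / b%:~R) = 0 /\ (a%:~R / b%:~R : rat) != 0.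
Proof.
case: divqP => [_ _ //| k x k0].
rewrite !abszM !oddM => /andP [_ on] /andP [_ od].
rewrite /ord2 !logn2_odd //; split => //.
by rewrite -numq_eq0; apply/eqP => e; rewrite e in on.
Qed.

Lemma frac_even (a b : int) : ~~ odd `|a|%N -> odd `|b|%N ->
  let x : rat := a%:~R / b%:~R in x == 0 \/ 1 <= ord2 x.
Proof.
case: divqP => [_ _ //| k x k0].
rewrite !abszM !oddM => ea /andP [ok od] /=.
have en : ~~ odd `|numq x|%N by move: ea; rewrite ok.
have [nz|nz] := eqVneq (numq x) 0.
  by left; rewrite -numq_eq0 nz.
right; rewrite /ord2 (logn2_odd od).
have n0 : (0 < `|numq x|)%N by rewrite absz_gt0.
have : (1 <= logn 2 `|numq x|)%N by rewrite -(pfactor_dvdn 1 (isT : prime 2) n0) expn1 dvdn2.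
lia.
Qed.

Lemma odd_p1 (x : int) : ~~ (2 %| 1 + 2 * x)%Z.
Proof. lia. Qed.
Lemma odd_m1 (x : int) : ~~ (2 %| -1 + 2 * x)%Z.
Proof. lia. Qed.

Lemma oddz (F : int) : odd `|F|%N = ~~ (2 %| F)%Z.
Proof. lia. Qed.
Lemma ev_sub (F o : int) : ~~ (2 %| F)%Z -> ~~ (2 %| o)%Z -> ~~ odd `|F - o|%N.
Proof. lia. Qed.
Lemma od_sub (P F o : int) : (2 %| P)%Z -> ~~ (2 %| o)%Z -> odd `|(P * F - o)%R|%N.
Proof. move=> /dvdzP [y ->]; rewrite -mulrA; move: (y * F) => z; lia. Qed.

Local Open Scope ring_scope.
Theorem lemma4p2 (alpha n : nat) (r : int) :
  (0 < n)%N ->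
  (2 ^ alpha %| n)%N ->
  ((2 ^ alpha)%:Z %| r)%Z ->
  (rat_cong2 (T2 alpha.+1 n r) 1 <-> exists m : nat, n = (2 ^ m)%N).
Proof.
move=> n0 hqn hqr.
set q := (2 ^ alpha)%N.
have q0 : (0 < q)%N by rewrite expn_gt0.
set m := (n %/ q)%N.
have hn : n = (q * m)%N by rewrite mulnC divnK.
have m0 : (0 < m)%N by move: n0; rewrite hn muln_gt0 => /andP[].
have hfl : floor_div_pow2m1 alpha.+1 n = m.
  by rewrite /floor_div_pow2m1 expnS -/q {1}hn mulnA mulKn // muln_gt0.
set N := (2 ^ alpha.+1)%N.
have hN : N = (q * 2)%N by rewrite /N expnS mulnC.
set Pn : {poly int} := (1 - 'X)^+n.
have hsz : (size Pn <= n.+1)%N.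
  by apply/leq_sizeP => j hj; rewrite coef_1subX bin_small ?mul0r.
have hS : \sum_(0 <= k < n.+1 | ((k%:Z - r) %% (2 ^ alpha.+1)%:Z)%Z == 0)
     ('C(n, k)%:R * (-1) ^+ k : rat) = (fold N r n.+1 Pn)%:~R.
  rewrite /fold rmorph_sum; apply: eq_bigr => k _.
  by rewrite coef_1subX rmorphM rmorphXn rmorphN1 /= rmorph_nat.
have [H hH] := exH alpha.
have hP : Pn = ((1 - 'X^q) + 2 * H)^+m by rewrite /Pn hn exprM hH.
have hZ : ('X^q : {poly int})^+2 - 1 = 'X^N - 1 by rewrite hN exprM.
have [F [hF hFo]] : exists F : int, fold N r n.+1 Pn = (2 ^ m.-1)%N%:R * F /\
    (pow2 m -> ~~ (2 %| F)%Z).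
  case: (boolP (pow2 m)) => pm.
    have [j hj] := pow2P _ pm.
    have [D [C e]] := good1 ('X^q) H j.
    rewrite -hj hZ -hP in e.
    set B := (n.+1 + size (D : {poly int}) + size (C : {poly int}) + N + q.+1)%N.
    exists (fold N r B ((1 - 'X^q) + 2 * D)); split; last first.
      move=> _; rewrite foldD foldB -(expr0 'X) !fold_Xn; try lia.
      rewrite -[2 : {poly int}]/(2%:R) foldMn.
      have := cnd_pm q0 hqr; rewrite -hN => /orP [] /eqP ->; move: (fold N r B D) => x; rewrite (_ : 2%:R = 2%:Z) //; [exact: odd_p1 | exact: odd_m1].
    rewrite -(fold_widen _ _ hsz (_ : n.+1 <= B)%N); last by rewrite /B; lia.
    rewrite e foldD fold_cyc ?addr0; last by rewrite /B; lia.
    by rewrite -natrX foldMn.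
  have [U [V [C e]]] := good ('X^q) H m.-1.
  rewrite prednK // hZ -hP in e.
  set B := (n.+1 + size (C : {poly int}) + N)%N.
  exists (fold N r B ((1 - 'X^q) * U + 2 * V)); split => //.
  rewrite -(fold_widen _ _ hsz (_ : n.+1 <= B)%N); last by rewrite /B; lia.
  rewrite e foldD fold_cyc ?addr0; last by rewrite /B; lia.
  by rewrite -natrX foldMn.
rewrite /T2 hfl hS hF.
have [o co hfact] := pfactor_coprime (isT : prime 2) (fact_gt0 m).
set e := logn 2 m`! in hfact.
have [he hpe] := v2fact m0; rewrite -/e in he hpe.
set k := (m.-1 - e)%N.
have hk : m.-1 = (k + e)%N by rewrite /k subnK //; lia.
have o0 : (0 < o)%N by move: co; rewrite coprime2n lt0n; apply: contraL => /eqP ->.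
have oo : ~~ (2 %| o%:Z)%Z by rewrite -oddz absz_nat -coprime2n.
have eT : ((m`!)%:R^-1 * ((2 ^ m.-1)%:R * F)%:~R - 1 : rat) =
    (((2 ^ k)%N%:Z * F - o%:Z)%:~R / (o%:Z)%:~R).
  have hz : forall x : nat, ((x%:R : int)%:~R : rat) = x%:R by move=> x; rewrite natz.
  have hz' : forall x : nat, ((Posz x)%:~R : rat) = x%:R by [].
  have L : (((2 ^ m.-1)%:R * F)%:~R : rat) = (2 ^ k)%:R * (2 ^ e)%:R * F%:~R.
    by rewrite rmorphM /= hz hk expnD natrM.
  have R1 : ((((2 ^ k)%N%:Z * F - o%:Z)%:~R) : rat) = (2 ^ k)%:R * F%:~R - o%:R.
    by rewrite rmorphB rmorphM /= !hz'.
  have h1 : (o%:R : rat) != 0 by rewrite pnatr_eq0 -lt0n.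
  have h2 : ((2 ^ e)%:R : rat) != 0 by rewrite pnatr_eq0 expn_eq0.
  rewrite L R1 hfact natrM hz'.
  field.
  by rewrite h1 h2.
rewrite /rat_cong2 eT.
case: (boolP (pow2 m)) => pm.
  have k0 : k = 0%N by rewrite /k; move: hpe; rewrite pm; lia.
  split => _.
    have [j hj] := pow2P _ pm; exists (alpha + j)%N; by rewrite hn hj expnD.
  have E : ~~ odd `|((2 ^ k)%N%:Z * F - o%:Z)%R|%N.
    by rewrite k0 (_ : (2 ^ 0)%N%:Z = 1) // mul1r; exact: ev_sub (hFo pm) oo.
  have Oo : odd `|o%:Z|%N by rewrite absz_nat -coprime2n.
  by case: (frac_even E Oo) => h; [left | right].
split.
  have h2 : (2 %| (2 ^ k)%N%:Z)%Z.
    have : (1 <= k)%N by rewrite /k; move: hpe; rewrite (negbTE pm); lia.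
    move=> k1; rewrite -(subnK k1) expnD expn1 PoszM; apply: dvdz_mull; exact: dvdzz.
  have Oo : odd `|o%:Z|%N by rewrite absz_nat -coprime2n.
  have [h3 h4] := frac_odd (od_sub F h2 oo) Oo.
  case; first by rewrite (negbTE h4).
  by rewrite h3.
move=> [t ht].
have : (m %| 2 ^ t)%N by rewrite -ht hn dvdn_mull.
case/(dvdn_pfactor _ _ (isT : prime 2)) => s _ hs.
by move: pm; rewrite hs; case/negP; apply/pow2P; exists s.
Qed.
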